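(* Let $n\in\mathbb{N}$ and let $A$ be an $n\times n$ acyclic real symmetric matrix. Suppose $\lambda$ is an eigenvalue of $A$ of multiplicity one and $u\in[n]$ is an index with $\phi(A-u,\lambda)\neq 0$. Define $\boldsymbol{\alpha}\in\mathbb{R}^n$ by \[ \boldsymbol{\alpha}(v)=\begin{cases} W(P_{u,v})\,\phi(A-P_{u,v},\lambda) & \text{if there is a path from } u \text{ to } v \text{ in } G(A),\\ 0 & \text{otherwise}.\end{cases} \] Then $\boldsymbol{\alpha}$ is a $\lambda$-eigenvector of $A$.
   Context: $[n]=\{1,\ldots,n\}$. For a real symmetric $n\times n$ matrix $A$, its graph $G(A)$ has vertex set $[n]$, with $u\neq v$ adjacent iff $A_{uv}\neq 0$; each edge $uv$ has weight $w(uv)=A_{uv}$ and each vertex $v$ has weight $w(v)=A_{vv}$. $A$ is called acyclic if $G(A)$ is a forest (i.e. $A$ is the adjacency matrix of a weighted forest with nonzero real edge weights and possibly vertex weights). When $u,v$ lie in the same component of the forest, $P_{u,v}$ denotes the unique path between them (a single vertex if $u=v$), and $W(P_{u,v})$ is the product of the weights of the edges of $P_{u,v}$ (equal to $1$ if $u=v$). For an index set (or vertex set of a subgraph) $U$, $A-U$ is the matrix obtained from $A$ by deleting rows and columns indexed by $U$. $\phi(B,\lambda)=\det(\lambda \mathbb{I}-B)$ is the characteristic polynomial evaluated at $\lambda$, with $\phi$ of the empty matrix equal to $1$. *)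

(* Defs.v *)
From HB Require Import structures.
From mathcomp Require Import all_boot all_order all_algebra.
From mathcomp Require Import all_reals.
From Stdlib Require Import ClassicalEpsilon.
Set Implicit Arguments. Unset Strict Implicit. Unset Printing Implicit Defensive.
Import Order.TTheory GRing.Theory Num.Theory.
Local Open Scope ring_scope.

Section GraphOfMatrix.
Variables (R : realType) (n : nat).
Implicit Types (A : 'M[R]_n) (u v : 'I_n) (s : seq 'I_n) (U : {set 'I_n}).

Definition madj A : rel 'I_n := fun u v => (u != v) && (A u v != 0).

Definition acyclic_mx A : Prop :=
  forall s, uniq s -> (3 <= size s)%N -> ~~ cycle (madj A) s.

Definition is_uvpath A u v s : bool :=
  [&& s != [::], head u s == u, last u s == v, uniq s &
      path (madj A) u (behead s)].

(* the path P_{u,v}, if one exists (unique in a forest) *)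
Definition Puv A u v : option (seq 'I_n) :=
  match excluded_middle_informative (exists s, is_uvpath A u v s) with
  | left h => Some (xchoose h)
  | right _ => None
  end.

Definition Wpath A s : R := \prod_(e <- zip s (behead s)) A e.1 e.2.

Definition mx_del A U : 'M[R]_#|~: U| :=
  \matrix_(i, j) A (enum_val i) (enum_val j).

Definition phi m (B : 'M[R]_m) (l : R) : R := (char_poly B).[l].

Definition alpha A u l : 'cV[R]_n :=
  \col_v match Puv A u v with
         | Some s => Wpath A s * phi (mx_del A [set x | x \in s]) l
         | None => 0
         end.
End GraphOfMatrix.

(* Main.v *)
Require Import Defs.
From HB Require Import structures.
From mathcomp Require Import all_boot all_order all_algebra.
From mathcomp Require Import all_reals.
From mathcomp Require Import fingroup perm.
From Stdlib Require Import ClassicalEpsilon.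
From mathcomp Require Import ring.
Import Order.TTheory GRing.Theory Num.Theory.
Local Open Scope ring_scope.

Section Det.
Set Implicit Arguments. Unset Strict Implicit.
Variables (R : realType) (n : nat).

Definition Nmx (M : 'M[R]_n) (S : {set 'I_n}) : 'M[R]_n :=
  \matrix_(i, j) if (i \in S) && (j \in S) then M i j else (i == j)%:R.

Lemma prod2 (F : 'I_n -> R) v w : v != w ->
  \prod_i F i = F v * F w * \prod_(i | (i != v) && (i != w)) F i.
Proof.
move=> vw; rewrite (bigD1 v) //= (bigD1 w) 1?eq_sym //= mulrA.
by congr (_ * _); apply: eq_bigl => i; rewrite andbC.
Qed.

Variable M : 'M[R]_n.
Hypothesis acyc : forall s, uniq s -> (3 <= size s)%N ->
  ~~ path.cycle (fun i j => (i != j) && (M i j != 0)) s.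

Lemma cyc_zero S (s : 'S_n) v w : w != v -> s v = w -> s w != v ->
  \prod_i Nmx M S i (s i) = 0.
Proof.
move=> wv svw swv; apply/eqP; apply: contraT => h.
have nz i : Nmx M S i (s i) != 0.
  by apply: contra h => /eqP hz; rewrite (bigD1 i) //= hz mul0r.
pose er := fun i j => (i != j) && (M i j != 0).
have ed i : s i != i -> er i (s i).
  move=> si; have := nz i; rewrite mxE; case: ifP => _.
    by move=> h1; rewrite /er eq_sym si h1.
  have si2 : (i == s i) = false by rewrite eq_sym (negPf si).
  by rewrite si2 mulr0n eqxx.
have hinj : injective s by apply: perm_inj.
have mv x : x \in orbit s v -> s x != x.
  rewrite -fconnect_orbit fconnect_sym // => /iter_findex hx.
  apply/negP => /eqP sx; move: hx; rewrite iter_fix // => xv; subst x.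
  by move: wv; rewrite -svw sx eqxx.
have sw : s w != w.
  by apply: contra wv => /eqP sw; apply/eqP; apply: hinj; rewrite sw svw.
have cyc : path.cycle er (orbit s v).
  apply: (sub_in_cycle (P := mem (orbit s v)) (e := frel s)).
  - move=> x y xo yo /= /eqP <-; exact: ed (mv x xo).
  - by apply/allP.
  - exact: cycle_orbit.
have sub : {subset [:: v; w; s w] <= orbit s v}.
  move=> x; rewrite !inE -!fconnect_orbit => /or3P[] /eqP ->.
  - exact: connect0.
  - by rewrite -svw fconnect1.
  - by rewrite -svw; apply: (connect_trans (fconnect1 s v)); apply: fconnect1.
have sz : (3 <= size (orbit s v))%N.
  have U : uniq [:: v; w; s w].
    by rewrite /= !inE negb_or eq_sym wv eq_sym swv eq_sym sw.
  exact: (uniq_leq_size U sub).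
exfalso; exact: (negP (acyc (orbit_uniq s v) sz) cyc).
Qed.

Lemma NmxE (S : {set 'I_n}) (i j : 'I_n) : Nmx M S i j = if (i \in S) && (j \in S) then M i j else (i == j)%:R.
Proof. by rewrite mxE. Qed.

Lemma Nmx_out (S : {set 'I_n}) (s : 'S_n) (i : 'I_n) : i \notin S -> s i != i -> \prod_j Nmx M S j (s j) = 0.
Proof.
move=> iS si; rewrite (bigD1 i) //= NmxE (negPf iS) /=.
have h : (i == s i) = false by rewrite eq_sym (negPf si).
by rewrite h mulr0n mul0r.
Qed.

Lemma det_rec (S : {set 'I_n}) (v : 'I_n) : v \in S ->
  \det (Nmx M S) = M v v * \det (Nmx M (S :\ v))
    - \sum_(w | w != v) Nmx M S v w * Nmx M S w v * \det (Nmx M (S :\ v :\ w)).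
Proof.
move=> vS.
pose T (X : 'M[R]_n) (s : 'S_n) := (-1) ^+ s * \prod_i X i (s i).
have detE X : \det X = \sum_(s : 'S_n) T X s by [].
rewrite [in LHS]detE (partition_big (fun s : 'S_n => s v) predT) //=.
rewrite (bigD1 v) //= -sumrN.
congr (_ + _).
  rewrite detE big_distrr /= [RHS](bigID (fun s : 'S_n => s v == v)) /=.
  rewrite [X in _ = _ + X]big1 ?addr0; last first.
    move=> s svv; rewrite /T (@Nmx_out _ _ v) ?mulr0 //.
    by rewrite setD11.
  apply: eq_bigr => s /eqP svv.
  rewrite /T mulrCA; congr (_ * _).
  rewrite (bigD1 v) //= [in RHS](bigD1 v) //= !NmxE svv vS setD11 eqxx /= mulr1n mul1r.
  congr (_ * _); apply: eq_bigr => i iv.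
  have siv : s i != v by rewrite -svv (inj_eq perm_inj).
  by rewrite !NmxE !in_setD1 iv siv.
apply: eq_bigr => w wv.
rewrite (bigID (fun s : 'S_n => s w == v)) /= [X in _ + X]big1 ?addr0; last first.
  move=> s /andP[/eqP svw swv]; rewrite /T (@cyc_zero _ _ v w) ?mulr0 //.
pose t := tperm v w.
rewrite (reindex_inj (mulgI t)) /=.
rewrite detE big_distrr /= -sumrN [RHS](bigID (fun s : 'S_n => (s v == v) && (s w == w))) /=.
rewrite [X in _ = _ + X]big1 ?addr0; last first.
  move=> s; rewrite negb_and => /orP[] h.
  - by rewrite /T (@Nmx_out _ _ v) ?mulr0 ?oppr0 // !inE eqxx ?andbF.
  - by rewrite /T (@Nmx_out _ _ w) ?mulr0 ?oppr0 // !inE eqxx ?andbF.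
have vw : v != w by rewrite eq_sym.
apply: eq_big => [s|s].
  by rewrite !permM /t tpermL tpermR andbC.
rewrite !permM /t tpermL tpermR => /andP[/eqP sww /eqP svv].
rewrite /T odd_permM signr_addb odd_tperm vw expr1 mulN1r mulNr -mulrN.
rewrite (prod2 _ vw) [in RHS](prod2 _ vw) !permM /t tpermL tpermR svv sww.
have -> : Nmx M (S :\ v :\ w) v v = 1 by rewrite NmxE !inE eqxx /= ?andbF.
have -> : Nmx M (S :\ v :\ w) w w = 1 by rewrite NmxE !inE eqxx /= ?andbF.
have -> : \prod_(i | (i != v) && (i != w)) Nmx M S i ((tperm v w * s)%g i) =
          \prod_(i | (i != v) && (i != w)) Nmx M (S :\ v :\ w) i (s i).
  apply: eq_bigr => i /andP[iv iw].
  rewrite permM tpermD 1?eq_sym //.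
  have siv : s i != v by rewrite -svv (inj_eq perm_inj).
  have siw : s i != w by rewrite -sww (inj_eq perm_inj).
  by rewrite !NmxE !inE iv iw siv siw.
by rewrite !mul1r mulrN mulrCA.
Qed.
End Det.

Section Link.
Set Implicit Arguments. Unset Strict Implicit.
Lemma det_reindex (R : realType) p n (X : 'M[R]_n) (f : 'I_p -> 'I_n) :
  injective f -> p = n -> \det (\matrix_(i, j) X (f i) (f j)) = \det X.
Proof.
move=> finj E; subst n.
have -> : \matrix_(i, j) X (f i) (f j) = row_perm (perm finj) (col_perm (perm finj) X).
  by apply/matrixP => i j; rewrite !mxE !permE.
rewrite row_permE col_permE !det_mulmx !det_perm odd_permV.
by rewrite mulrCA -signr_addb addbb expr0 mulr1.
Qed.

Lemma horner_char (R : realType) m (B : 'M[R]_m) l :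
  (char_poly B).[l] = \det (l%:M - B).
Proof.
rewrite /char_poly -horner_evalE -det_map_mx; congr (\det _).
apply/matrixP => i j; rewrite !mxE /= horner_evalE.
by rewrite hornerD hornerN hornerMn hornerX hornerC.
Qed.

Lemma det_sub (R : realType) n (X : 'M[R]_n) (S : {set 'I_n}) :
  \det (\matrix_(i, j) X (@enum_val _ (mem S) i) (@enum_val _ (mem S) j)) = \det (Nmx X S).
Proof.
pose f (i : 'I_(#|S| + #|~: S|)) : 'I_n :=
  match split i with inl a => @enum_val _ (mem S) a | inr b => @enum_val _ (mem (~: S)) b end.
have E : (#|S| + #|~: S| = n)%N by rewrite cardsC card_ord.
have finj : injective f.
  move=> i j; rewrite -[i]splitK -[j]splitK /f.
  case: (split i) => a; case: (split j) => b; rewrite !unsplitK /=.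
  - by move/enum_val_inj => ->.
  - move=> h; have := enum_valP a; have := enum_valP b; rewrite -h inE.
    by move=> /negP.
  - move=> h; have := enum_valP a; have := enum_valP b; rewrite -h inE.
    by move=> + /negP.
  - by move/enum_val_inj => ->.
rewrite -(det_reindex (Nmx X S) finj E).
have -> : \matrix_(i, j) Nmx X S (f i) (f j) =
   block_mx (\matrix_(i, j) X (@enum_val _ (mem S) i) (@enum_val _ (mem S) j)) 0 0 1%:M.
  apply/matrixP => i j; rewrite /f !mxE.
  case: (split i) => a; rewrite mxE; case: (split j) => b; rewrite ?mxE.
  - by rewrite !enum_valP.
  - have := enum_valP b; rewrite inE => /negPf nb.
    rewrite nb andbF; case: eqP => // h.
    by move: (enum_valP a); rewrite h nb.
  - have := enum_valP a; rewrite inE => /negPf na.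
    rewrite na /=; case: eqP => // h.
    by move: (enum_valP b); rewrite -h na.
  - have := enum_valP a; rewrite inE => /negPf na.
    by rewrite na /= (inj_eq enum_val_inj).
by rewrite det_ublock det1 mulr1.
Qed.

Lemma phi_Nmx (R : realType) n (A : 'M[R]_n) (U : {set 'I_n}) l :
  phi (mx_del A U) l = \det (Nmx (l%:M - A) (~: U)).
Proof.
rewrite /phi horner_char -det_sub; congr (\det _).
by apply/matrixP => i j; rewrite !mxE (inj_eq enum_val_inj).
Qed.

End Link.

Lemma decomp_has (T : eqType) (a : pred T) s : has a s ->
  exists s1 z s2, [/\ s = s1 ++ z :: s2, a z & ~~ has a s1].
Proof.
elim: s => //= x s IH; case ax: (a x) => /= h.
- by exists [::], x, s.
- have [s1 [z [s2 [-> az hs]]]] := IH h.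
  by exists (x :: s1), z, s2; rewrite /= ax.
Qed.

Section Graph.
Set Implicit Arguments. Unset Strict Implicit.
Variables (R : realType) (n : nat) (A : 'M[R]_n).
Hypothesis Asym : A^T = A.
Hypothesis Aacyc : acyclic_mx A.
Local Notation e := (madj A).

Lemma madjC x y : e x y = e y x.
Proof. by rewrite /madj eq_sym -{1}Asym mxE. Qed.

Lemma rev_path_sym x p : path e x p -> path e (last x p) (rev (belast x p)).
Proof. by move=> h; rewrite rev_path; apply: sub_path h => a b /=; rewrite madjC. Qed.

Lemma no_diverge u t1 t2 : path e u t1 -> path e u t2 -> uniq (u :: t1) ->
  uniq (u :: t2) -> t1 != [::] -> t2 != [::] -> last u t1 = last u t2 ->
  head u t1 != head u t2 -> False.
Proof.
move=> p1 p2 u1 u2 n1 n2 hl hd.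
have : has (mem t1) t2.
  apply/hasP; exists (last u t2).
    by case: t2 {p2 u2 hl hd} n2 => // x r _; rewrite /= mem_last.
  by rewrite -hl; case: t1 {p1 u1 hl hd} n1 => // x r _; rewrite /= mem_last.
case/decomp_has => a [z [b [E2 zt1 ha]]].
move: zt1; rewrite inE => /splitPr E1.
move: E1 p1 u1 n1 hl hd ha => [c d] p1 u1 n1 hl hd ha.
subst t2.
have H := @Aacyc (u :: c ++ z :: rev a).
apply: (negP (H _ _)).
- move: u1 u2; rewrite !cons_uniq !cat_uniq !mem_cat !inE /= rev_uniq mem_rev.
  move=> /andP[/norP[uc /norP[uz ud]] /and3P[uc' hc /andP[zd ud']]].
  move=> /andP[/norP[ua _] /and3P[ua' _ _]].
  rewrite (negPf uc) (negPf uz) (negPf ua) uc' ua' mem_rev has_rev /=.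
  move: hc => /norP[/negPf-> _] /=.
  apply/andP; split.
    apply/hasPn => x xa; apply/negP => xc; move/hasP: ha; apply; exists x => //.
    by change (x \in c ++ z :: d); rewrite mem_cat xc.
  rewrite andbT; apply/negP => za; move/hasP: ha; apply; exists z => //.
  by change (z \in c ++ z :: d); rewrite mem_cat inE eqxx orbT.
- rewrite /= size_cat /= size_rev.
  clear -hd; case: c hd => [|x c] /=; last by rewrite addnS.
  by case: a => [|y a] //=; rewrite eqxx.
- rewrite /= rcons_cat cat_path.
  move: p1; rewrite cat_path /= => /and3P[-> -> _] /=.
  move: p2; rewrite cat_path /= => /and3P[pa eaz _].
  have h : path e u (rcons a z) by rewrite rcons_path pa eaz.
  by have := rev_path_sym h; rewrite last_rcons belast_rcons rev_cons.
Qed.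

Lemma path_uniq u t1 t2 : path e u t1 -> path e u t2 -> uniq (u :: t1) ->
  uniq (u :: t2) -> last u t1 = last u t2 -> t1 = t2.
Proof.
elim: t1 u t2 => [|x1 r1 IH] u [|x2 r2] //.
- move=> _ _ _ /= /andP[+ _] hl; rewrite /= in hl; rewrite hl.
  by rewrite mem_last.
- move=> _ _ /= /andP[+ _] _ hl; rewrite /= in hl; rewrite -hl.
  by rewrite mem_last.
move=> p1 p2 u1 u2 hl.
case: (eqVneq x1 x2) => [ex|nx].
  subst x2; congr (_ :: _); apply: (IH x1).
  - by case/andP: p1.
  - by case/andP: p2.
  - by case/andP: u1.
  - by case/andP: u2.
  - done.
by exfalso; apply: (no_diverge p1 p2 u1 u2 _ _ hl).
Qed.

Lemma uvpath_cons u v t :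
  is_uvpath A u v (u :: t) = [&& last u t == v, uniq (u :: t) & path e u t].
Proof. by rewrite /is_uvpath /= eqxx. Qed.

Lemma uvpath_inv u v s : is_uvpath A u v s -> exists t, s = u :: t.
Proof.
case: s => [|x t]; rewrite /is_uvpath /=; first by [].
by case/and4P => /eqP -> _ _ _; exists t.
Qed.

Lemma uvpath_uniq u v s1 s2 : is_uvpath A u v s1 -> is_uvpath A u v s2 -> s1 = s2.
Proof.
move=> h1 h2; have [t1 E1] := uvpath_inv h1; have [t2 E2] := uvpath_inv h2.
subst; move: h1 h2; rewrite !uvpath_cons => /and3P[/eqP l1 u1 p1] /and3P[/eqP l2 u2 p2].
by congr (_ :: _); apply: (path_uniq p1 p2 u1 u2); rewrite l1 l2.
Qed.

Lemma Puv_some u v s : is_uvpath A u v s -> Puv A u v = Some s.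
Proof.
move=> h; rewrite /Puv; case: excluded_middle_informative => [ex|nex].
  by congr Some; apply: uvpath_uniq (xchooseP ex) h.
by exfalso; apply: nex; exists s.
Qed.

Lemma Puv_none u v : (forall s, ~~ is_uvpath A u v s) -> Puv A u v = None.
Proof.
move=> h; rewrite /Puv; case: excluded_middle_informative => [[s hs]|//].
by move: (h s); rewrite hs.
Qed.

Lemma prefix_split (u w : 'I_n) t : w \in u :: t ->
  exists t1 t2, t = t1 ++ t2 /\ last u t1 = w.
Proof.
rewrite inE => /orP[/eqP->|]; first by exists [::], t.
case/splitPr => t1 t2; exists (rcons t1 w), t2.
by rewrite cat_rcons last_rcons.
Qed.
Variables (l : R) (u : 'I_n).
Hypothesis eig : eigenvalue A l.

Lemma AC i j : A j i = A i j.
Proof. by rewrite -{1}Asym mxE. Qed.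

Lemma Moff i j : i != j -> (l%:M - A) i j = - A i j.
Proof. by move=> ij; rewrite !mxE (negPf ij) mulr0n sub0r. Qed.

Lemma acycM s : uniq s -> (3 <= size s)%N ->
  ~~ path.cycle (fun i j => (i != j) && ((l%:M - A) i j != 0)) s.
Proof.
move=> us ss; rewrite (@eq_cycle _ _ (madj A)); first exact: Aacyc.
move=> i j; rewrite /madj; case: (eqVneq i j) => [->|ij] //=.
by rewrite Moff // oppr_eq0.
Qed.

Lemma Puv_spec v s : Puv A u v = Some s -> is_uvpath A u v s.
Proof.
by rewrite /Puv; case: excluded_middle_informative => // h [<-]; exact: xchooseP h.
Qed.

Lemma Wpath1 x : Wpath A [:: x] = 1.
Proof. by rewrite /Wpath /= big_nil. Qed.

Lemma Wpath_cons2 x y r : Wpath A [:: x, y & r] = A x y * Wpath A (y :: r).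
Proof. by rewrite /Wpath /= big_cons. Qed.

Lemma Wpath_rcons x t w : Wpath A (x :: rcons t w) = Wpath A (x :: t) * A (last x t) w.
Proof.
elim: t x => [|y t IH] x /=; first by rewrite Wpath_cons2 !Wpath1 mul1r mulr1.
by rewrite Wpath_cons2 IH Wpath_cons2 mulrA.
Qed.

Lemma setC_nil : ~: [set x : 'I_n | x \in [::]] = setT.
Proof. by apply/setP => x; rewrite !inE. Qed.

Lemma setC_cons_rcons (y : 'I_n) s w :
  ~: [set x | x \in y :: rcons s w] = (~: [set x | x \in y :: s]) :\ w.
Proof.
apply/setP => x; rewrite !inE mem_rcons !inE.
by case: (x == y); case: (x == w); case: (x \in s).
Qed.

Lemma alE v : alpha A u l v 0 = match Puv A u v with
  | Some s => Wpath A s * \det (Nmx (l%:M - A) (~: [set x | x \in s]))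
  | None => 0 end.
Proof. by rewrite mxE; case: (Puv A u v) => // s; rewrite phi_Nmx. Qed.

Lemma path_ext w t v : is_uvpath A u w (u :: t) -> v \notin u :: t -> madj A w v ->
  is_uvpath A u v (u :: rcons t v).
Proof.
rewrite !uvpath_cons => /and3P[/eqP lw ut pt] vt ewv.
by rewrite last_rcons eqxx -rcons_cons rcons_uniq vt ut rcons_path pt lw ewv.
Qed.

Lemma path_pre w t v : is_uvpath A u w (u :: t) -> v \in u :: t ->
  exists t1 t2, t = t1 ++ t2 /\ is_uvpath A u v (u :: t1).
Proof.
move=> h vt; have [t1 [t2 [E lv]]] := prefix_split vt.
exists t1, t2; split => //; move: h; rewrite !uvpath_cons E => /and3P[_ ut pt].
rewrite lv eqxx; move: ut pt; rewrite -cat_cons cat_uniq cat_path.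
by case/and3P => -> _ _ /andP[-> _].
Qed.

Lemma nopath_nb v w : Puv A u v = None -> madj A v w -> Puv A u w = None.
Proof.
move=> hv evw; case E: (Puv A u w) => [s|] //.
have hs := Puv_spec E; have [t Et] := uvpath_inv hs; subst s.
case: (boolP (v \in u :: t)) => vt.
  have [t1 [t2 [_ h]]] := path_pre hs vt.
  by rewrite (Puv_some h) in hv.
have ewv : madj A w v by rewrite madjC.
by rewrite (Puv_some (path_ext hs vt ewv)) in hv.
Qed.

Lemma uvpath_rcons t0 v : is_uvpath A u v (u :: rcons t0 v) ->
  [/\ is_uvpath A u (last u t0) (u :: t0), v \notin u :: t0 & madj A (last u t0) v].
Proof.
rewrite !uvpath_cons last_rcons eqxx -rcons_cons rcons_uniq rcons_path.
by move=> /and4P[_ /andP[vq uq] pq ep]; split => //; rewrite eqxx uq pq.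
Qed.

Lemma nonadj_q t0 v w : is_uvpath A u v (u :: rcons t0 v) -> w \in u :: t0 ->
  w != last u t0 -> A v w = 0.
Proof.
move=> h wq wp; apply/eqP; apply: contraT => avw.
have [hq vq _] := uvpath_rcons h.
have [t1 [t2 [E hw]]] := path_pre hq wq.
have wv : w != v by apply: contraNneq vq => <-.
have ewv : madj A w v by rewrite madjC /madj eq_sym wv avw.
have vt1 : v \notin u :: t1.
  by apply: contra vq; rewrite E -cat_cons mem_cat => ->.
have h2 := path_ext hw vt1 ewv.
have E0 : rcons t0 v = rcons t1 v by move: (uvpath_uniq h h2) => [->].
have E1 : t0 = t1 by apply: (@rcons_injl _ v).
move: hw; rewrite uvpath_cons -E1 => /and3P[/eqP lw _ _].
by rewrite lw eqxx in wp.
Qed.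

Lemma alg1 (a c d : R) : - a * (c * a * d) = - c * (- a * - a * d).
Proof. ring. Qed.

Lemma alg2 (m c1 c2 d1 X : R) :
  m * (c1 * c2 * d1) + (- c2 * (c1 * (m * d1 - X)) + - (c1 * c2) * X) = 0.
Proof. ring. Qed.

Lemma Dall : \det (Nmx (l%:M - A) setT) = 0.
Proof.
have -> : Nmx (l%:M - A) setT = l%:M - A by apply/matrixP => i j; rewrite mxE !in_setT.
by rewrite -horner_char; apply/eqP; move: eig; rewrite eigenvalue_root_char.
Qed.

Lemma key v : \sum_w (l%:M - A) v w * alpha A u l w 0 = 0.
Proof.
case: (eqVneq v u) => [->|vu].
  have hu : is_uvpath A u u [:: u] by rewrite uvpath_cons eqxx.
  have S1 : ~: [set x | x \in [:: u]] = setT :\ u.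
    by apply/setP => x; rewrite !inE andbT.
  have hr := det_rec acycM (in_setT u).
  rewrite Dall in hr.
  rewrite (bigD1 u) //= alE (Puv_some hu) Wpath1 mul1r S1.
  have -> : \sum_(w | w != u) (l%:M - A) u w * alpha A u l w 0 =
     - \sum_(w | w != u) Nmx (l%:M - A) setT u w * Nmx (l%:M - A) setT w u *
        \det (Nmx (l%:M - A) (setT :\ u :\ w)).
    rewrite -sumrN; apply: eq_bigr => w wu.
    rewrite !NmxE !in_setT /= Moff 1?eq_sym // Moff //.
    case: (eqVneq (A u w) 0) => [a0|a0].
      by rewrite a0 AC a0 oppr0 !mul0r oppr0.
    have euw : madj A u w by rewrite /madj eq_sym wu a0.
    have hp : is_uvpath A u w [:: u; w].
      by rewrite uvpath_cons /= eqxx /= inE eq_sym wu euw.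
    have S2 : ~: [set x | x \in [:: u; w]] = setT :\ u :\ w.
      by apply/setP => x; rewrite !inE andbT negb_or andbC.
    rewrite alE (Puv_some hp) Wpath_cons2 Wpath1 mulr1 S2 AC.
    by rewrite mulNr mulNr mulrN opprK mulrA.
  exact: esym hr.
case E: (Puv A u v) => [s|]; last first.
  apply: big1 => w _.
  case: (eqVneq w v) => [->|wv]; first by rewrite alE E mulr0.
  case: (eqVneq (A v w) 0) => [avw|avw].
    by rewrite Moff 1?eq_sym // avw oppr0 mul0r.
  have evw : madj A v w by rewrite /madj eq_sym wv avw.
  by rewrite alE (nopath_nb E evw) mulr0.
have hs := Puv_spec E; have [t Et] := uvpath_inv hs; subst s.
case/lastP: t hs E => [|t0 x] hs E.
  by move: hs; rewrite uvpath_cons => /and3P[/eqP h _ _]; move: vu; rewrite -h /= eqxx.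
have xv : x = v by move: hs; rewrite uvpath_cons last_rcons => /andP[/eqP].
subst x.
have [hq vq epv] := uvpath_rcons hs.
have Eq := Puv_some hq.
have pq : last u t0 \in u :: t0 := mem_last u t0.
have pv : last u t0 != v by apply: contraNneq vq => <-.
have vS : v \in ~: [set x | x \in u :: t0] by rewrite !inE.
have hr := det_rec acycM vS.
rewrite (bigD1 (last u t0)) //= in hr.
have pS : last u t0 \notin ~: [set x | x \in u :: t0] by rewrite !inE negbK.
have vp : (v == last u t0) = false by rewrite eq_sym (negPf pv).
have Np : Nmx (l%:M - A) (~: [set x | x \in u :: t0]) v (last u t0) = 0.
  by rewrite NmxE (negPf pS) andbF vp.
rewrite Np !mul0r add0r in hr.
rewrite (bigD1 v) // (bigD1 (last u t0)) //= alE E setC_cons_rcons Wpath_rcons alE Eq.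
set S := ~: [set x | x \in u :: t0] in vS pS Np hr *.
have rest : \sum_(i | (i != v) && (i != last u t0)) (l%:M - A) v i * alpha A u l i 0 =
   - (Wpath A (u :: t0) * A (last u t0) v) *
   \sum_(i | (i != v) && (i != last u t0))
      Nmx (l%:M - A) S v i * Nmx (l%:M - A) S i v * \det (Nmx (l%:M - A) (S :\ v :\ i)).
  rewrite big_distrr /=; apply: eq_bigr => w /andP[wv wp].
  have vw' : (v == w) = false by rewrite eq_sym (negPf wv).
  case: (boolP (w \in u :: t0)) => wq.
    have avw := nonadj_q hs wq wp.
    have wS : w \notin S by rewrite !inE negbK.
    rewrite Moff 1?eq_sym // avw oppr0 mul0r.
    by rewrite NmxE (negPf wS) andbF vw' /= mulr0n !mul0r mulr0.
  have wS : w \in S by rewrite !inE.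
  case: (eqVneq (A v w) 0) => [a0|a0].
    rewrite Moff 1?eq_sym // a0 oppr0 mul0r.
    by rewrite NmxE vS wS /= Moff 1?eq_sym // a0 oppr0 !mul0r mulr0.
  have evw : madj A v w by rewrite /madj eq_sym wv a0.
  have wnot : w \notin u :: rcons t0 v.
    by rewrite -rcons_cons mem_rcons inE negb_or wv.
  have hw := path_ext hs wnot evw.
  rewrite alE (Puv_some hw) Wpath_rcons last_rcons Wpath_rcons !setC_cons_rcons.
  rewrite !NmxE vS wS /= Moff 1?eq_sym // Moff // (AC v w).
  exact: alg1.
have Mvp : (l%:M - A) v (last u t0) = - A (last u t0) v.
  by rewrite Moff 1?eq_sym // AC.
rewrite rest Mvp hr.
exact: alg2.
Qed.

End Graph.

Theorem theorem3p1 (R : realType) (n : nat) (A : 'M[R]_n) (l : R) (u : 'I_n) :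
  A^T = A ->
  acyclic_mx A ->
  eigenvalue A l ->
  mup l (char_poly A) = 1%N ->
  phi (mx_del A [set u]) l != 0 ->
  alpha A u l != 0 /\ A *m alpha A u l = l *: alpha A u l.
Proof.
move=> Asym Aacyc eig _ hphi.
have hu : is_uvpath A u u [:: u] by rewrite uvpath_cons eqxx.
split.
  apply/negP => /eqP h0.
  have := congr1 (fun X : 'cV[R]_n => X u 0) h0.
  rewrite mxE (Puv_some Asym Aacyc hu) Wpath1 mul1r mxE.
  have -> : [set x | x \in [:: u]] = [set u] by apply/setP => x; rewrite !inE.
  by move/eqP; rewrite (negPf hphi).
have Z : (l%:M - A) *m alpha A u l = 0.
  apply/matrixP => v k; rewrite (ord1 k) mxE [RHS]mxE.
  exact: (key Asym Aacyc u eig v).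
by move/eqP: Z; rewrite mulmxBl mul_scalar_mx subr_eq0 => /eqP ->.
Qed.
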